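(* Let $f$ be a DNF with $k$ terms over $\{0,1\}^n$ and let $y\in\{0,1\}^n$ satisfy $f_{>\tau}$ and not $f_{\le\tau}$ ($\tau=1000k$). Draw a uniformly random permutation $\pi$ of $[n]$ and run the sweep process from $y$, obtaining $z_0,z_1,\dots,z_n$. Then with probability at least $2^{-\tilde{O}(\sqrt{k})}$ there is some $i$ such that $\textsc{GenerateCandidateStem}(f,z_i)$ is a valid stem for some term of $f$ satisfied by $y$.
   Context: Terms are sets of literals, a DNF is a set of terms; $|T|$ is the number of literals; $g_{\le L}$ / $g_{>L}$ are the sub-DNFs of terms of length $\le L$ / $>L$. A term $T'$ is a valid stem of a term $T$ if $T'\subseteq T$ and $|T\setminus T'|\le 2k$. $x^{\oplus j}$ is $x$ with bit $j$ flipped. $\textsc{GenerateCandidateStem}(f,x)$: let $I=\{i: f(x^{\oplus i})=0\}$ and output the term $\{x_i:i\in I,x_i=1\}\cup\{\overline{x_i}:i\in I,x_i=0\}$. Sweep process: given $y$ with $f(y)=1$ and a permutation $\pi$ listing $[n]$ as $\pi(0),\dots,\pi(n-1)$, $z_0=y$, and $z_{t+1}=z_t^{\oplus\pi(t)}$ if $f(z_t^{\oplus\pi(t)})=1$, else $z_{t+1}=z_t$. (This is one iteration of the outer loop of the procedure FindCandidateStem.) *)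

(* Defs.v *)
From mathcomp Require Import all_boot all_fingroup.
From Stdlib Require Import Reals.
Set Implicit Arguments. Unset Strict Implicit. Unset Printing Implicit Defensive.

Definition point (n : nat) := {ffun 'I_n -> bool}.
(* A literal (i, b): b = true is x_i, b = false is ~x_i. *)
Definition literal (n : nat) := ('I_n * bool)%type.
Definition term (n : nat) := {set literal n}.
Definition dnf (n : nat) := {set term n}.

Definition term_sat n (T : term n) (x : point n) : bool :=
  [forall l in T, x l.1 == l.2].
Definition dnf_eval n (f : dnf n) (x : point n) : bool :=
  [exists T in f, term_sat T x].

Definition dnf_le n (g : dnf n) (L : nat) : dnf n := [set T in g | #|T| <= L].
Definition dnf_gt n (g : dnf n) (L : nat) : dnf n := [set T in g | L < #|T|].

Definition flip n (x : point n) (j : 'I_n) : point n :=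
  [ffun i => if i == j then ~~ x i else x i].

Definition valid_stem n (k : nat) (T' T : term n) : Prop :=
  T' \subset T /\ #|T :\: T'| <= 2 * k.

Definition gen_candidate_stem n (f : dnf n) (x : point n) : term n :=
  [set (i, x i) | i in [set i : 'I_n | ~~ dnf_eval f (flip x i)]].

Definition sweep_step n (f : dnf n) (z : point n) (j : 'I_n) : point n :=
  if dnf_eval f (flip z j) then flip z j else z.

Definition sweep n (f : dnf n) (y : point n) (pi : {perm 'I_n}) (t : nat) : point n :=
  foldl (sweep_step f) y (take t [seq pi i | i <- enum 'I_n]).

Definition good_perm n (f : dnf n) (y : point n) (pi : {perm 'I_n}) : bool :=
  [exists i : 'I_n.+1, exists T in f,
     term_sat T y && ((gen_candidate_stem f (sweep f y pi i) \subset T) &&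
                      (#|T :\: gen_candidate_stem f (sweep f y pi i)| <= 2 * #|f|))].

Definition prob_good n (f : dnf n) (y : point n) : R :=
  (INR #|[set pi : {perm 'I_n} | good_perm f y pi]| / INR #|{perm 'I_n}|)%R.

(* Main.v *)
Require Import Defs.
From mathcomp Require Import all_boot all_fingroup.
From mathcomp Require Import zify.
From Stdlib Require Import Reals Lia Lra.
Set Implicit Arguments. Unset Strict Implicit. Unset Printing Implicit Defensive.

Section Basic.
Variable n : nat.
Implicit Types (z : point n) (T : term n).

Lemma satE T z : term_sat T z -> forall l, l \in T -> z l.1 = l.2.
Proof. by move=> /forallP H l lT; have := H l; rewrite lT /= => /eqP. Qed.

Lemma satI T z : (forall l, l \in T -> z l.1 = l.2) -> term_sat T z.
Proof. by move=> H; apply/forallP => l; apply/implyP => lT; rewrite H. Qed.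

Lemma flipE z j i : flip z j i = if i == j then ~~ z i else z i.
Proof. by rewrite /flip ffunE. Qed.

Lemma flip_sat T z x : term_sat T z -> (forall b, (x, b) \notin T) -> term_sat T (flip z x).
Proof.
move=> H Hx; apply: satI => -[i b] lT /=; rewrite flipE.
case: eqP => [E|_]; last exact: (satE H lT).
by move: (Hx b) => /negP[]; rewrite -E.
Qed.

Lemma flip_sat_back T z x : term_sat T (flip z x) -> (forall b, (x, b) \notin T) -> term_sat T z.
Proof.
move=> H Hx; apply: satI => -[i b] lT /=; have := satE H lT; rewrite flipE /=.
case: eqP => [E|_] //; by move: (Hx b) => /negP[]; rewrite -E.
Qed.

Lemma uniq_flip T z i j : ~~ term_sat T z -> term_sat T (flip z i) -> term_sat T (flip z j) -> i = j.
Proof.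
move=> /forallPn [l]; rewrite negb_imply => /andP [lT Hl] Hi Hj.
have Hi' := satE Hi lT; have Hj' := satE Hj lT; rewrite !flipE in Hi' Hj'.
have Ei : l.1 = i by move: Hi'; case: eqP => // _ E; rewrite E eqxx in Hl.
have Ej : l.1 = j by move: Hj'; case: eqP => // _ E; rewrite E eqxx in Hl.
by rewrite -Ei -Ej.
Qed.

Lemma stem_mem (f : dnf n) z i : ((i, z i) \in gen_candidate_stem f z) = ~~ dnf_eval f (flip z i).
Proof.
rewrite /gen_candidate_stem mem_imset ?inE //.
by move=> a b [].
Qed.

Lemma stem_sub (f : dnf n) z T : T \in f -> term_sat T z -> gen_candidate_stem f z \subset T.
Proof.
move=> Tf Hs; apply/subsetP => l /imsetP [i]; rewrite inE => Hi ->.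
apply: contraNT Hi => HnT; apply/existsP; exists T; rewrite Tf /=.
apply: flip_sat => // b; apply/negP => Hb; have := satE Hs Hb; rewrite /= => E.
by move: HnT => /negP[]; rewrite E.
Qed.

End Basic.

Lemma arith a k m r X Y : k <= a * a -> 0 < m -> m * (k + m + 1) <= X + Y ->
  Y <= r * (m - 1) -> r + m <= k -> m * r <= a * X.
Proof.
move=> Ha Hm HXY HY Hr.
have HY' : Y <= (k - m) * (m - 1) by apply: (leq_trans HY); apply: leq_mul; lia.
have HX : 2 * m * m + k <= X by nia.
have Hk : m * k <= a * (2 * m * m + k).
  case: (leqP m a) => Hma; first by nia.
  nia.
nia.
Qed.


Arguments INR : simpl never.
Section RS.
Variable I : eqType.
Definition sumR (s : seq I) (F : I -> R) : R := \big[Rplus/0%R]_(x <- s) F x.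

Lemma INR_sum s (g : I -> nat) : INR (\sum_(x <- s) g x) = sumR s (fun x => INR (g x)).
Proof.
rewrite /sumR; elim: s => [|x s IH]; first by rewrite !big_nil.
by rewrite !big_cons plus_INR IH.
Qed.

Lemma sumR_le s F G : (forall x, x \in s -> (F x <= G x)%R) -> (sumR s F <= sumR s G)%R.
Proof.
rewrite /sumR; elim: s => [|x s IH] H; first by rewrite !big_nil; lra.
rewrite !big_cons; apply: Rplus_le_compat; first by apply: H; rewrite mem_head.
by apply: IH => u us; apply: H; rewrite in_cons us orbT.
Qed.

Lemma sumR_lin s (p : pred I) (g : I -> nat) (c b : R) :
  sumR s (fun x => if p x then 0%R else (c * (1 + b * INR (g x)))%R) =
  (c * (INR (count (predC p) s) + b * INR (\sum_(x <- s | ~~ p x) g x)))%R.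
Proof.
rewrite /sumR; elim: s => [|x s IH]; first by rewrite !big_nil /= (_ : INR 0 = 0%R) //; ring.
rewrite !big_cons IH /=; case: (p x) => /=; rewrite ?add0n ?add1n ?S_INR ?plus_INR; ring.
Qed.
End RS.

Lemma bernoulli (x : R) (a : nat) : (0 <= x)%R -> (1 + INR a * x <= (1 + x) ^ a)%R.
Proof.
move=> Hx; elim: a => [|a IH]; first by rewrite /= (_ : INR 0 = 0%R) //; lra.
rewrite S_INR /=.
have H0 : (0 <= (1 + x) ^ a)%R by apply: pow_le; lra.
have Ha := pos_INR a.
have H1 : ((1 + x) * (1 + INR a * x) <= (1 + x) * (1 + x) ^ a)%R by apply: Rmult_le_compat_l; lra.
have H2 : (0 <= INR a * x * x)%R by apply: Rmult_le_pos; [apply: Rmult_le_pos|]; lra.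
nra.
Qed.

Lemma key_real (m d a : nat) : (d < m)%N ->
  ((1 + INR a * INR d / INR m) / INR m ^ a <= / INR (m - d) ^ a)%R.
Proof.
move=> Hdm.
have Hp : (0 < INR (m - d))%R by apply: lt_0_INR; apply/ltP; lia.
have HM : INR m = (INR (m - d) + INR d)%R by rewrite -plus_INR; congr INR; lia.
set p := INR (m - d) in Hp HM *; set D := INR d in HM *.
have HD : (0 <= D)%R by apply: pos_INR.
have HMp : (0 < INR m)%R by lra.
have Hpa : (0 < p ^ a)%R by apply: pow_lt.
have HMa : (0 < INR m ^ a)%R by apply: pow_lt.
have E : INR m = (p * (1 + D / p))%R by rewrite HM; field; lra.
have B := @bernoulli (D / p) a (Rle_mult_inv_pos _ _ HD Hp).
have H1 : (INR a * D / INR m <= INR a * (D / p))%R.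
  rewrite /Rdiv Rmult_assoc; apply: Rmult_le_compat_l; first exact: pos_INR.
  apply: Rmult_le_compat_l => //; apply: Rinv_le_contravar => //; lra.
have H2 : ((1 + INR a * D / INR m) * p ^ a <= INR m ^ a)%R.
  have -> : (INR m ^ a = p ^ a * (1 + D / p) ^ a)%R by rewrite E Rpow_mult_distr.
  rewrite Rmult_comm; apply: Rmult_le_compat_l; first lra.
  lra.
apply: (Rmult_le_reg_r (INR m ^ a * p ^ a)); first by apply: Rmult_lt_0_compat.
have -> : ((1 + INR a * D / INR m) / INR m ^ a * (INR m ^ a * p ^ a) =
           (1 + INR a * D / INR m) * p ^ a)%R by field; lra.
have -> : (/ p ^ a * (INR m ^ a * p ^ a) = INR m ^ a)%R by field; lra.
exact: H2.
Qed.


Lemma count_allpairs (S T U : Type) (P : pred U) (g : S -> T -> U) (xs : seq S) (F : S -> seq T) :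
  count P [seq g x t | x <- xs, t <- F x] = \sum_(x <- xs) count (fun t => P (g x t)) (F x).
Proof.
elim: xs => [|x xs IH]; first by rewrite big_nil.
by rewrite big_cons /= count_cat count_map IH.
Qed.

Lemma count_perms_cons (I : eqType) (P : pred (seq I)) s : 0 < size s -> uniq s ->
  count P (permutations s) = \sum_(x <- s) count (fun t => P (x :: t)) (permutations (rem x s)).
Proof.
move=> Hs Us; rewrite (seq.permP (permutationsE Hs)) undup_id //.
exact: count_allpairs.
Qed.

Lemma sum_split (I : Type) (s : seq I) (p : pred I) (g : I -> nat) :
  \sum_(x <- s) g x = \sum_(x <- s | ~~ p x) g x + \sum_(x <- s | p x) g x.
Proof.
elim: s => [|x s IH]; first by rewrite !big_nil.
rewrite !big_cons IH; case: (p x) => /=; lia.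
Qed.

Lemma sum_le_count (I : eqType) (s : seq I) (p : pred I) (g : I -> nat) c :
  (forall x, x \in s -> p x -> g x <= c) -> \sum_(x <- s | p x) g x <= count p s * c.
Proof.
elim: s => [|x s IH] H; first by rewrite big_nil.
rewrite big_cons /=.
have IH' : \sum_(x <- s | p x) g x <= count p s * c.
  by apply: IH => u us; apply: H; rewrite in_cons us orbT.
case Hp: (p x) => /=; last by rewrite add0n.
have := H x (mem_head _ _) Hp; lia.
Qed.

Lemma count_le_card (I : finType) (s : seq I) (A : {set I}) :
  uniq s -> count (fun x => x \in A) s <= #|A|.
Proof.
move=> Us; rewrite -size_filter cardE; apply: uniq_leq_size; first exact: filter_uniq.
by move=> x; rewrite mem_filter mem_enum => /andP [].
Qed.


Lemma sum_bool (I : finType) (A : {pred I}) (P : pred I) :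
  \sum_(i in A) (P i : nat) = #|[set i in A | P i]|.
Proof.
rewrite -sum1_card [RHS]big_mkcond [LHS]big_mkcond /=; apply: eq_bigr => i _.
by rewrite !inE; case: (i \in A); case: (P i).
Qed.

Section Core.
Variables (n : nat) (f : dnf n) (y : point n).
Implicit Types (z : point n) (T : term n).

Definition Sset : {set term n} := [set T in f | term_sat T y].
Definition alive z : {set term n} := [set T in f | term_sat T z].
Definition goodz z := [exists T in f, term_sat T y &&
   ((gen_candidate_stem f z \subset T) && (#|T :\: gen_candidate_stem f z| <= 2 * #|f|))].
Definition Rset z : {set 'I_n} :=
  [set i | [exists T in f, ~~ term_sat T y && term_sat T (flip z i)]].
Definition exd z x := [exists T in alive z, (x, z x) \notin T].
Definition dd z x : nat := \sum_(T in alive z) ((x, z x) \in T) && exd z x.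
Definition Eset z (s : seq 'I_n) T : {set 'I_n} :=
  [set x | (x \in s) && (((x, z x) \in T) && exd z x)].
Definition Inv z (s : seq 'I_n) :=
  [/\ alive z \subset Sset, alive z != set0,
      (forall i T T', i \notin s -> T \in alive z -> T' \in alive z ->
          (i, z i) \in T -> (i, z i) \in T') &
      (forall i, i \in s -> z i = y i)].

Lemma Rset_card z : alive z \subset Sset -> #|Rset z| + #|alive z| <= #|f|.
Proof.
move=> HA.
pose g (i : 'I_n) : term n := odflt set0 [pick T in f :\: Sset | term_sat T (flip z i)].
have Hg : forall i, i \in Rset z -> g i \in f :\: Sset /\ term_sat (g i) (flip z i).
  move=> i; rewrite inE => /existsP [T /and3P [Tf nTy Tz]].
  rewrite /g; case: pickP => [T' /andP [H1 H2]|H] /=; first by [].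
  by move: (H T); rewrite !inE Tf nTy Tz.
have Hinj : {in Rset z &, injective g}.
  move=> i j Hi Hj E; have [Hi1 Hi2] := Hg i Hi; have [Hj1 Hj2] := Hg j Hj.
  rewrite E in Hi1 Hi2.
  have Hnz : ~~ term_sat (g j) z.
    apply/negP => Hs; move: Hj1; rewrite !inE => /andP [Hn Hf].
    have : g j \in alive z by rewrite inE Hf Hs.
    by move=> /(subsetP HA); rewrite inE (negbTE Hn).
  exact: uniq_flip Hnz Hi2 Hj2.
have H1 : #|Rset z| <= #|f :\: Sset|.
  rewrite -(card_in_imset Hinj); apply: subset_leq_card; apply/subsetP => T.
  by move=> /imsetP [i Hi ->]; have [] := Hg i Hi.
have H2 : #|alive z| <= #|Sset| by apply: subset_leq_card.
have H3 : #|Sset| + #|f :\: Sset| = #|f|.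
  rewrite -(cardsID Sset f); congr (_ + _).
  by rewrite (setIidPr _) //; apply/subsetP => T; rewrite inE => /andP[].
lia.
Qed.


Lemma notgood_E z s T : Inv z s -> ~~ goodz z -> T \in alive z ->
  #|f| + #|alive z| < #|Eset z s T|.
Proof.
move=> [HA Hne Hc Hd] Hng HT.
have /andP [Tf HTz] : (T \in f) && term_sat T z by move: HT; rewrite inE.
have HTy : term_sat T y by move: (subsetP HA T HT); rewrite inE => /andP[].
have Hsub := stem_sub Tf HTz.
have H1 : 2 * #|f| < #|T :\: gen_candidate_stem f z|.
  by move/existsPn: Hng => /(_ T); rewrite Tf HTy Hsub /= -ltnNge.
have H2 : #|T :\: gen_candidate_stem f z| <= #|Eset z s T :|: Rset z|.
  have inj : {in T :\: gen_candidate_stem f z &, injective (@fst 'I_n bool)}.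
    move=> [i b] [j c]; rewrite !inE => /andP[_ Hb] /andP[_ Hc'] /= E.
    subst j; have := satE HTz Hb; have := satE HTz Hc'; by move=> /= -> ->.
  rewrite -(card_in_imset inj); apply: subset_leq_card; apply/subsetP => i.
  move=> /imsetP [[j b] Hl ->] /=; rewrite inE in Hl; case/andP: Hl => Hns HlT.
  have Eb : z j = b := satE HTz HlT; subst b.
  rewrite stem_mem negbK in Hns; case/existsP: Hns => T'' /andP [T''f Hs''].
  rewrite inE; apply/orP; case Hy'': (term_sat T'' y); last first.
    by right; rewrite inE; apply/existsP; exists T''; rewrite T''f Hy'' Hs''.
  left.
  have Hzy : y j = z j := satE HTy HlT.
  have Hno : forall b, (j, b) \notin T''.
    move=> b; apply/negP => Hb; have := satE Hs'' Hb; have := satE Hy'' Hb.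
    rewrite /= flipE eqxx Hzy => <-; by case: (z j).
  have Hz'' : term_sat T'' z := flip_sat_back Hs'' Hno.
  have Hin'' : T'' \in alive z by rewrite inE T''f Hz''.
  have Hn'' := Hno (z j).
  rewrite inE; apply/and3P; split => //.
    apply/negPn/negP => Hjs; have := Hc j T T'' Hjs HT Hin'' HlT.
    by rewrite (negbTE Hn'').
  by apply/existsP; exists T''; rewrite Hin'' Hn''.
have H3 := cardsU (Eset z s T) (Rset z).
have H4 := Rset_card HA.
lia.
Qed.

Lemma alive_flip_sub z s x T : Inv z s -> x \in s -> x \notin Rset z -> T \in f ->
  term_sat T (flip z x) -> T \in alive z /\ (x, z x) \notin T.
Proof.
move=> [HA _ _ Hd] xs xR Tf Hs.
have Hy : term_sat T y.
  apply/negPn/negP => Hny; move: xR; rewrite inE => /negP; apply.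
  by apply/existsP; exists T; rewrite Tf Hny Hs.
have Hno : forall b, (x, b) \notin T.
  move=> b; apply/negP => Hb; have := satE Hs Hb; have := satE Hy Hb.
  rewrite /= flipE eqxx (Hd x xs) => <-; by case: (y x).
by split; [rewrite inE Tf (flip_sat_back Hs Hno) | exact: Hno].
Qed.

Lemma step_lemma z s x : Inv z s -> uniq s -> x \in s -> x \notin Rset z ->
  Inv (sweep_step f z x) (rem x s) /\
  #|alive (sweep_step f z x)| + dd z x = #|alive z|.
Proof.
move=> HI Us xs xR; have HI' := HI; case: HI' => HA Hne Hc Hd.
have remE : forall i, (i \in rem x s) = (i != x) && (i \in s).
  by move=> i; rewrite (mem_rem_uniq x Us) inE.
have HcS : forall i T T', i \notin rem x s -> i != x -> T \in alive z -> T' \in alive z ->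
          (i, z i) \in T -> (i, z i) \in T'.
  by move=> i T T' Hi Nix; apply: Hc; move: Hi; rewrite remE Nix.
case Hex: (exd z x).
  case/existsP: Hex => T' /andP [HT'A HT'n].
  have /andP [T'f HT'z] : (T' \in f) && term_sat T' z by move: HT'A; rewrite inE.
  have Hno' : forall b, (x, b) \notin T'.
    move=> b; apply/negP => Hb; have Eb := satE HT'z Hb; simpl in Eb.
    by rewrite -Eb in Hb; rewrite Hb in HT'n.
  have Hev : dnf_eval f (flip z x).
    by apply/existsP; exists T'; rewrite T'f (flip_sat HT'z Hno').
  have Estep : sweep_step f z x = flip z x by rewrite /sweep_step Hev.
  have Ealive : alive (flip z x) = [set T in alive z | (x, z x) \notin T].
    apply/setP => T; rewrite !inE; apply/idP/idP.
      move=> /andP [Tf Hs]; have [H1 H2] := alive_flip_sub HI xs xR Tf Hs.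
      by rewrite inE in H1; rewrite H1 H2.
    move=> /andP [/andP [Tf Hs] Hn]; rewrite Tf /=; apply: flip_sat => // b.
    apply/negP => Hb; have Eb := satE Hs Hb; simpl in Eb.
    by rewrite -Eb in Hb; rewrite Hb in Hn.
  rewrite Estep; split.
    rewrite /Inv Ealive; split.
    - apply/subsetP => T; rewrite !inE => /andP [/andP [Tf Hs] _].
      by move: (subsetP HA T); rewrite !inE Tf Hs; apply.
    - by apply/set0Pn; exists T'; rewrite inE HT'A HT'n.
    - move=> i T T2 Hi; rewrite !inE => /andP[HTA HTn] /andP[HT2A HT2n].
      have HTA' : T \in alive z by rewrite inE.
      have HT2A' : T2 \in alive z by rewrite inE.
      rewrite flipE; case: eqP => [Eix | /eqP Nix].
        subst i => Hb; have /andP [_ HTz] := HTA.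
        have := satE HTz Hb; simpl; by case: (z x).
      exact: HcS.
    - move=> i; rewrite remE => /andP [Hix His]; rewrite flipE (negbTE Hix); exact: Hd.
  have Edd : dd z x = #|[set T in alive z | (x, z x) \in T]|.
    rewrite /dd -sum_bool; apply: eq_bigr => T _.
    suff -> : exd z x by rewrite andbT.
    by apply/existsP; exists T'; rewrite HT'A HT'n.
  have E1 : alive z :&: [set T : term n | (x, z x) \in T] = [set T in alive z | (x, z x) \in T].
    by apply/setP => T; rewrite !inE.
  have E2 : alive z :\: [set T : term n | (x, z x) \in T] = [set T in alive z | (x, z x) \notin T].
    by apply/setP => T; rewrite !inE andbC.
  by rewrite Ealive Edd -E1 -E2 addnC cardsID.
have Hnev : ~~ dnf_eval f (flip z x).
  apply/existsP => -[T /andP [Tf Hs]]; have [H1 H2] := alive_flip_sub HI xs xR Tf Hs.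
  suff : exd z x by rewrite Hex.
  by apply/existsP; exists T; rewrite H1 H2.
have Estep : sweep_step f z x = z by rewrite /sweep_step (negbTE Hnev).
have Edd : dd z x = 0 by rewrite /dd Hex big1 // => T _; rewrite andbF.
rewrite Estep Edd addn0; split => //; split => //.
- move=> i T T2 Hi HT HT2; case: (i =P x) => [-> | /eqP Nix].
    by move=> _; move/negbT/existsPn: Hex => /(_ T2); rewrite HT2 /= negbK.
  exact: HcS.
- by move=> i; rewrite remE => /andP [_ His]; exact: Hd.
Qed.

Lemma dd_lt z x : alive z != set0 -> dd z x < #|alive z|.
Proof.
move=> Hne; rewrite /dd; case Hex: (exd z x); last first.
  by rewrite big1 ?card_gt0 // => T _; rewrite andbF.
case/existsP: Hex => T' /andP [HT'A HT'n].
rewrite sum_bool (cardsD1 T' (alive z)) HT'A add1n ltnS.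
apply: subset_leq_card; apply/subsetP => T; rewrite !inE => /andP [/andP[Hf Hs] /andP [HT _]].
rewrite Hf Hs /= ?andbT; apply/eqP => E; subst T; by rewrite HT in HT'n.
Qed.

Lemma sum_dd z s : uniq s -> \sum_(x <- s) dd z x = \sum_(T in alive z) #|Eset z s T|.
Proof.
move=> Us; rewrite big_uniq // /dd exchange_big /=; apply: eq_bigr => T _.
rewrite sum_bool; apply: eq_card => x; by rewrite !inE.
Qed.

Lemma notgood_sum z s : Inv z s -> uniq s -> ~~ goodz z ->
  #|alive z| * (#|f| + #|alive z| + 1) <= \sum_(x <- s) dd z x.
Proof.
move=> HI Us Hng; rewrite sum_dd // -sum_nat_const; apply: leq_sum => T HT.
have := notgood_E HI Hng HT; lia.
Qed.

Fixpoint succ z (s : seq 'I_n) : bool :=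
  goodz z || (if s is x :: s' then succ (sweep_step f z x) s' else false).

Lemma good_count z s : goodz z -> count (succ z) (permutations s) = size (permutations s).
Proof.
move=> Hg; apply/eqP; rewrite -all_count; apply/allP => t _.
by case: t => [|x t] /=; rewrite Hg.
Qed.

Lemma div_le1 (x M : R) : (0 <= x)%R -> (1 <= M)%R -> (x / M <= x)%R.
Proof.
move=> Hx HM; rewrite /Rdiv; rewrite -{2}(Rmult_1_r x); apply: Rmult_le_compat_l => //.
rewrite -Rinv_1; apply: Rinv_le_contravar; lra.
Qed.

Lemma pow_ge1 (m a : nat) : (0 < m)%N -> (1 <= INR m ^ a)%R.
Proof.
move=> Hm; apply: pow_R1_Rle; rewrite -(_ : INR 1 = 1%R) //.
by apply: le_INR; apply/leP.
Qed.

Lemma main_ind (a : nat) (Ha : #|f| <= a * a) : forall N s z, size s = N -> uniq s -> Inv z s ->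
  (INR N`! / INR #|alive z| ^ a <= INR (count (succ z) (permutations s)))%R.
Proof.
elim=> [|N IH] s z Hs Us HI; have HI' := HI; case: HI' => HA Hne Hc Hd;
  have Hm : 0 < #|alive z| by rewrite card_gt0.
- case Hg: (goodz z).
    rewrite good_count // size_permutations // Hs.
    by apply: div_le1; [apply: pos_INR | apply: pow_ge1].
  have := notgood_sum HI Us (negbT Hg).
  by rewrite (size0nil Hs) big_nil; nia.
case Hg: (goodz z).
  rewrite good_count // size_permutations // Hs.
  by apply: div_le1; [apply: pos_INR | apply: pow_ge1].
have Hsum := notgood_sum HI Us (negbT Hg).
set m := #|alive z| in Hm Hsum *.
have s0 : 0 < size s by rewrite Hs.
rewrite count_perms_cons //.
have E : forall x, count (fun t => succ z (x :: t)) (permutations (rem x s)) =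
                  count (succ (sweep_step f z x)) (permutations (rem x s)).
  by move=> x; apply: eq_count => t /=; rewrite Hg.
rewrite (eq_bigr _ (fun x _ => E x)) INR_sum.
set c := (INR N`! / INR m ^ a)%R.
set b := (INR a / INR m)%R.
have Hmpos : (0 < INR m)%R by apply: lt_0_INR; apply/ltP.
have Hc0 : (0 <= c)%R.
  rewrite /c /Rdiv; apply: Rle_mult_inv_pos; first exact: pos_INR.
  by apply: pow_lt.
apply: (Rle_trans _ (sumR s (fun x => if x \in Rset z then 0%R
                                  else (c * (1 + b * INR (dd z x)))%R))); last first.
  apply: sumR_le => x xs; case: ifP => xR; first exact: pos_INR.
  have [HI2 Hcard] := step_lemma HI Us xs (negbT xR).
  have Hsz : size (rem x s) = N by rewrite size_rem // Hs.
  have IHx := IH _ _ Hsz (rem_uniq x Us) HI2.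
  apply: Rle_trans IHx.
  have Hlt : dd z x < m by exact: dd_lt.
  have -> : #|alive (sweep_step f z x)| = m - dd z x by rewrite -/m; lia.
  have -> : (c * (1 + b * INR (dd z x)) =
            INR N`! * ((1 + INR a * INR (dd z x) / INR m) / INR m ^ a))%R.
    rewrite /c /b /Rdiv; ring.
  rewrite /Rdiv; apply: Rmult_le_compat_l; first exact: pos_INR.
  exact: key_real.
rewrite sumR_lin.
set r := count (fun x => x \in Rset z) s.
set X := \sum_(x <- s | ~~ (x \in Rset z)) dd z x.
have Hsplit := sum_split s (fun x => x \in Rset z) (dd z).
have HY : \sum_(x <- s | x \in Rset z) dd z x <= r * (m - 1).
  apply: sum_le_count => x _ _; have := dd_lt x Hne; rewrite -/m; lia.
have Hr : r + m <= #|f|.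
  have := count_le_card (Rset z) Us; have := Rset_card HA; rewrite -/r -/m; lia.
have HaX : m * r <= a * X by apply: (arith Ha Hm _ HY Hr); rewrite -/X -Hsplit.
have Hcnt : count (predC (fun x => x \in Rset z)) s + r = N.+1.
  by rewrite addnC count_predC Hs.
have HaXR : (INR m * INR r <= INR a * INR X)%R by rewrite -!mult_INR; apply: le_INR; apply/leP.
have Hb : (INR r <= b * INR X)%R.
  rewrite /b /Rdiv (Rmult_comm (INR a)) Rmult_assoc.
  apply: (Rmult_le_reg_l (INR m)) => //.
  rewrite -Rmult_assoc Rinv_r; last lra.
  lra.
have -> : (INR N.+1`! / INR m ^ a = c * INR N.+1)%R.
  by rewrite factS mult_INR /c /Rdiv; ring.
apply: Rmult_le_compat_l => //.
rewrite -Hcnt plus_INR; apply: Rplus_le_compat_l; exact: Hb.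
Qed.

End Core.

Lemma succ_good n (f : dnf n) (y z : point n) s : succ f y z s ->
  exists2 t, t <= size s & goodz f y (foldl (sweep_step f) z (take t s)).
Proof.
elim: s z => [|x s IH] z /=.
  by rewrite orbF => H; exists 0.
case/orP => [H|H]; first by exists 0; rewrite ?take0.
by have [t Ht Hg] := IH _ H; exists t.+1.
Qed.

Lemma count_le_card_perm n (P : pred (seq 'I_n)) :
  count P (permutations (enum 'I_n)) <= #|[set pi : {perm 'I_n} | P [seq pi i | i <- enum 'I_n]]|.
Proof.
set A := [set pi : {perm 'I_n} | P [seq pi i | i <- enum 'I_n]].
have -> : #|A| = size [seq [seq pi i | i <- enum 'I_n] | pi : {perm 'I_n} in A] by rewrite size_map -cardE.
rewrite -size_filter; apply: uniq_leq_size; first by rewrite filter_uniq // permutations_uniq.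
move=> t; rewrite mem_filter mem_permutations => /andP [Pt Ht].
have Hsz : size t == n by rewrite (perm_size Ht) size_enum_ord.
pose tt := Tuple Hsz.
have Hu : uniq tt by rewrite /= (perm_uniq Ht) enum_uniq.
pose pi := perm (elimT (tuple_uniqP tt) Hu).
have Hpi : [seq pi i | i <- enum 'I_n] = t.
  by rewrite (eq_map (permE _)) map_tnth_enum.
by apply/mapP; exists pi; [rewrite mem_enum inE Hpi | rewrite Hpi].
Qed.

Lemma exp_le (u v : R) : (u <= v)%R -> (exp u <= exp v)%R.
Proof.
move=> H; case: (Rle_lt_or_eq_dec _ _ H) => [H'|->]; last lra.
by apply: Rlt_le; apply: exp_increasing.
Qed.

Open Scope R_scope.
Lemma alg (s q L l2 : R) : (0 <= s -> s <= q -> 1 <= q -> 0 <= L -> /2 < l2 ->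
  -(2*q*(L+1)^2)*l2 <= -(s+1)*L)%R.
Proof.
intros Hs Hsq Hq HL Hl.
set (P := q * (L+1)^2).
assert (H1 : (s + 1) * L <= 2 * (q * L)) by (rewrite <- Rmult_assoc; apply Rmult_le_compat_r; lra).
assert (H2 : 4 * L <= (L + 1) ^ 2) by (assert (0 <= (L-1)*(L-1)) by (apply Rle_0_sqr); simpl; lra).
assert (H3 : 0 <= P) by (apply Rmult_le_pos; nra).
assert (H5 : q * (4 * L) <= P) by (apply Rmult_le_compat_l; lra).
assert (H4 : P * 1 <= P * (2 * l2)) by (apply Rmult_le_compat_l; lra).
assert (H6 : 0 <= q * L) by (apply Rmult_le_pos; lra).
assert (E : -(2*q*(L+1)^2)*l2 = - (P * (2 * l2))) by (unfold P; ring).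
rewrite E.
assert (E2 : q * (4 * L) = 4 * (q * L)) by ring.
lra.
Qed.
Close Scope R_scope.


Lemma final_real (k : nat) : (1 <= k)%N ->
  (Rpower 2 (- (2 * sqrt (INR k) * Rpower (ln (INR k) + 1) 2)) <= / INR k ^ (Nat.sqrt k).+1)%R.
Proof.
move=> Hk.
have HkR : (1 <= INR k)%R by rewrite -(_ : INR 1 = 1%R) //; apply: le_INR; apply/leP.
set s := Nat.sqrt k.
have Hss : s * s <= k by have [H _] := Nat.sqrt_spec k (le_0_n k); apply/leP.
have Hs0 : (0 <= INR s)%R := pos_INR s.
have Hsq : (INR s <= sqrt (INR k))%R.
  rewrite -(sqrt_square (INR s)) //; apply: sqrt_le_1_alt.
  by rewrite -mult_INR; apply: le_INR; apply/leP.
have Hsq1 : (1 <= sqrt (INR k))%R by rewrite -sqrt_1; apply: sqrt_le_1_alt.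
set L := ln (INR k).
have HL : (0 <= L)%R.
  rewrite /L; case: (Rle_lt_or_eq_dec _ _ HkR) => [H|<-]; last by rewrite ln_1; lra.
  by rewrite -ln_1; apply: Rlt_le; apply: ln_increasing; lra.
have E2 : (2 = INR 2)%R by rewrite !S_INR (_ : INR 0 = 0%R) //; lra.
have HL1 : (0 < L + 1)%R by lra.
rewrite {3}E2 Rpower_pow //.
have Hk0 : (0 < INR k)%R by lra.
rewrite -(@Rpower_pow (Nat.sqrt k).+1 (INR k) Hk0) -Rpower_Ropp /Rpower.
apply: exp_le.
rewrite S_INR; apply: alg => //; exact: ln_lt_2.
Qed.

Theorem lemma4p12 :
  exists C : R, (0 < C)%R /\
  forall (n : nat) (f : dnf n) (y : point n),
    let k := #|f| in
    let tau := 1000 * k in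
    dnf_eval (dnf_gt f tau) y -> ~~ dnf_eval (dnf_le f tau) y ->
    (Rpower 2 (- (C * sqrt (INR k) * Rpower (ln (INR k) + 1) C)) <= prob_good f y)%R.
Proof.
exists 2%R; split; first lra.
move=> n f y k tau Hgt _.
case/existsP: Hgt => T0 /andP [HT0 HT0y]; rewrite inE in HT0; case/andP: HT0 => HT0f _.
have HT0A : T0 \in alive f y by rewrite inE HT0f HT0y.
set m := #|alive f y|.
have Hm : 0 < m by rewrite /m card_gt0; apply/set0Pn; exists T0.
have Hmk : m <= k by rewrite /m /k; apply: subset_leq_card; apply/subsetP => T; rewrite inE => /andP[].
set a := (Nat.sqrt k).+1.
have Ha : k <= a * a.
  have [_ H] := Nat.sqrt_spec k (le_0_n k); rewrite /a; apply/leP; lia.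
have HI : Inv f y y (enum 'I_n).
  split.
  - by apply/subsetP => T; rewrite !inE.
  - by apply/set0Pn; exists T0.
  - by move=> i T T'; rewrite mem_enum.
  - by [].
have HM := main_ind Ha (size_enum_ord n) (enum_uniq _) HI.
have Hcnt : count (succ f y y) (permutations (enum 'I_n)) <=
            #|[set pi : {perm 'I_n} | good_perm f y pi]|.
  apply: (leq_trans (count_le_card_perm _)); apply: subset_leq_card.
  apply/subsetP => pi; rewrite !inE => /succ_good [t Ht Hg].
  rewrite size_map size_enum_ord in Ht.
  apply/existsP; exists (Ordinal (n:=n.+1) (m:=t) Ht); exact: Hg.
rewrite /prob_good card_Sn -/m in HM *.
have Hn : (0 < INR n`!)%R by apply: lt_0_INR; apply/ltP; apply: fact_gt0.
have Hmpos : (0 < INR m)%R by apply: lt_0_INR; apply/ltP.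
have Hma : (0 < INR m ^ a)%R by apply: pow_lt.
have Hkpos : (0 < INR k)%R by apply: lt_0_INR; apply/ltP; lia.
have Hka : (0 < INR k ^ a)%R by apply: pow_lt.
have Hstep1 : (/ INR m ^ a <= INR #|[set pi | good_perm f y pi]| / INR n`!)%R.
  apply: (Rmult_le_reg_r (INR n`!)) => //.
  rewrite /Rdiv Rmult_assoc Rinv_l; last lra.
  rewrite Rmult_1_r Rmult_comm.
  apply: (Rle_trans _ _ _ HM); apply: le_INR; apply/leP; exact: Hcnt.
have Hstep2 : (/ INR k ^ a <= / INR m ^ a)%R.
  apply: Rinv_le_contravar => //; apply: pow_incr; split; first lra.
  by apply: le_INR; apply/leP.
have Hk1 : 1 <= k by lia.
have := final_real Hk1.
rewrite -/a => H; apply: (Rle_trans _ _ _ H); exact: (Rle_trans _ _ _ Hstep2 Hstep1).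
Qed.
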